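(* The $K$-bilinear map $\psi:\mathfrak{stl}_4(R)\times\mathfrak{stl}_4(R)\to\mathcal W$ defined below is a Leibniz $2$-cocycle, i.e. for all $x,y,z\in\mathfrak{stl}_4(R)$, $$\psi(x,[y,z])+\psi([x,z],y)-\psi([x,y],z)=0.$$
   Context: $K$ is a unital commutative ring, $R$ a unital associative $K$-algebra, free as a $K$-module with a basis containing $1$. Leibniz algebra: $K$-bilinear bracket with $[x,[y,z]]=[[x,y],z]-[[x,z],y]$. $\mathfrak{stl}_4(R)$ is the Leibniz algebra over $K$ generated by $X_{ij}(a)$, $a\in R$, $1\le i\ne j\le 4$, subject to: $X_{ij}$ is $K$-linear in $a$; $[X_{ij}(a),X_{jk}(b)]=X_{ik}(ab)$ and $[X_{ij}(a),X_{ki}(b)]=-X_{kj}(ba)$ for distinct $i,j,k$; $[X_{ij}(a),X_{kl}(b)]=0$ for $j\ne k$, $i\ne l$. With $H$ the $K$-span of all $[X_{ij}(a),X_{ji}(b)]$, one has $\mathfrak{stl}_4(R)=H\oplus\bigoplus_{i\ne j}X_{ij}(R)$ and each $a\mapsto X_{ij}(a)$ is injective. $R_2:=R/\mathcal I_2$ where $\mathcal I_2=2R+R[R,R]$ is the ideal generated by all $2a$ and $ab-ba$; $\bar a$ denotes the class of $a$ (so $R_2$ is commutative and $\bar a=-\bar a$). $\mathcal W=R_2^6$, and $\epsilon_m(\bar a)$ ($1\le m\le 6$) is the element with $m$-th coordinate $\bar a$ and others $0$. Let $P$ be the set of quadruples $(i,j,k,l)$ with $\{i,j,k,l\}=\{1,2,3,4\}$;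 $S_4$ acts on $P$ componentwise, and $G=\{(1),(13),(24),(13)(24)\}$. Partition $P$ into the six sets $(\sigma G)((1,2,3,4))$, $\sigma G\in S_4/G$ (so $(i,j,k,l)$, $(k,j,i,l)$, $(i,l,k,j)$, $(k,l,i,j)$ lie in the same class); label these classes $1,\dots,6$ with the class of $(1,2,3,4)$ labelled $1$, and let $\theta:P\to\{1,\dots,6\}$ send a quadruple to its label. Define $\psi$ as the $K$-bilinear map with $\psi(X_{ij}(a),X_{kl}(b))=\epsilon_{\theta((i,j,k,l))}(\overline{ab})$ for $a,b\in R$ and $i,j,k,l$ pairwise distinct, $\psi(X_{ij}(a),X_{kl}(b))=0$ if $i,j,k,l$ are not pairwise distinct, and $\psi(h,x)=\psi(x,h)=0$ for $h\in H$. *)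

(* Defs.v *)
From HB Require Import structures.
From mathcomp Require Import all_boot all_order all_algebra.
Set Implicit Arguments. Unset Strict Implicit. Unset Printing Implicit Defensive.
Import GRing.Theory.
Local Open Scope ring_scope.

Definition free_with_basis_containing_1 (K : comNzRingType) (R : algType K) : Prop :=
  exists (I : eqType) (b : I -> R) (i0 : I),
    b i0 = 1 /\
    (forall x : R, exists (s : seq I) (c : I -> K), x = \sum_(i <- s) c i *: b i) /\
    (forall (s : seq I) (c : I -> K), uniq s ->
        \sum_(i <- s) c i *: b i = 0 -> forall i, i \in s -> c i = 0).

(* The ideal I_2 = 2R + R[R,R] of R: the two-sided ideal generated by all 2a *)
(* and all ab - ba, i.e. the set of finite sums of elements u * g * v with g  *)
(* a generator.                                                               *)
Definition ideal_gen_I2 (K : comNzRingType) (R : algType K) (g : R) : Prop :=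
  (exists a : R, g = a *+ 2) \/ (exists a b : R, g = a * b - b * a).

Definition in_I2 (K : comNzRingType) (R : algType K) (x : R) : Prop :=
  exists (n : nat) (u g v : 'I_n -> R),
    (forall t, ideal_gen_I2 (g t)) /\ x = \sum_(t < n) u t * g t * v t.

Definition is_quotient_R2 (K : comNzRingType) (R : algType K) (R2 : lmodType K)
  (pr : R -> R2) : Prop :=
  (forall (k : K) (a b : R), pr (k *: a + b) = k *: pr a + pr b) /\
  (forall y : R2, exists a : R, pr a = y) /\
  (forall a : R, pr a = 0 <-> in_I2 a).

Definition is_leibniz (K : comNzRingType) (L : lmodType K) (br : L -> L -> L) : Prop :=
  (forall (k : K) (x y z : L), br (k *: x + y) z = k *: br x z + br y z) /\
  (forall (k : K) (x y z : L), br x (k *: y + z) = k *: br x y + br x z) /\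
  (forall x y z : L, br x (br y z) = br (br x y) z - br (br x z) y).

Definition stl4_relations (K : comNzRingType) (R : algType K) (M : lmodType K)
  (br : M -> M -> M) (Y : 'I_4 -> 'I_4 -> R -> M) : Prop :=
  (forall (i j : 'I_4), i != j ->
     forall (k : K) (a b : R), Y i j (k *: a + b) = k *: Y i j a + Y i j b) /\
  (forall (i j k : 'I_4), i != j -> j != k -> i != k ->
     forall a b : R, br (Y i j a) (Y j k b) = Y i k (a * b)) /\
  (forall (i j k : 'I_4), i != j -> j != k -> i != k ->
     forall a b : R, br (Y i j a) (Y k i b) = - Y k j (b * a)) /\
  (forall (i j k l : 'I_4), i != j -> k != l -> j != k -> i != l ->
     forall a b : R, br (Y i j a) (Y k l b) = 0).

Definition is_stl4 (K : comNzRingType) (R : algType K) (L : lmodType K)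
  (br : L -> L -> L) (X : 'I_4 -> 'I_4 -> R -> L) : Prop :=
  is_leibniz br /\ stl4_relations br X /\
  (forall (M : lmodType K) (brM : M -> M -> M) (Y : 'I_4 -> 'I_4 -> R -> M),
     is_leibniz brM -> stl4_relations brM Y ->
     (exists f : L -> M,
        (forall (k : K) (x y : L), f (k *: x + y) = k *: f x + f y) /\
        (forall x y : L, f (br x y) = brM (f x) (f y)) /\
        (forall (i j : 'I_4) (a : R), i != j -> f (X i j a) = Y i j a)) /\
     (forall f g : L -> M,
        (forall (k : K) (x y : L), f (k *: x + y) = k *: f x + f y) ->
        (forall x y : L, f (br x y) = brM (f x) (f y)) ->
        (forall (i j : 'I_4) (a : R), i != j -> f (X i j a) = Y i j a) ->
        (forall (k : K) (x y : L), g (k *: x + y) = k *: g x + g y) ->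
        (forall x y : L, g (br x y) = brM (g x) (g y)) ->
        (forall (i j : 'I_4) (a : R), i != j -> g (X i j a) = Y i j a) ->
        forall x, f x = g x)).

Definition pairwise_distinct4 (i j k l : 'I_4) : bool :=
  [&& i != j, i != k, i != l, j != k, j != l & k != l].

(* (i,j,k,l) and (i',j',k',l') lie in the same class (sigma G)((1,2,3,4)),   *)
(* G = {(1),(13),(24),(13)(24)} acting on positions.                          *)
Definition same_class4 (i j k l i' j' k' l' : 'I_4) : Prop :=
  [\/ (i', j', k', l') = (i, j, k, l), (i', j', k', l') = (k, j, i, l),
      (i', j', k', l') = (i, l, k, j) | (i', j', k', l') = (k, l, i, j)].

Definition is_class_labelling (theta : 'I_4 -> 'I_4 -> 'I_4 -> 'I_4 -> 'I_6) : Prop :=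
  (forall i j k l i' j' k' l' : 'I_4,
     pairwise_distinct4 i j k l -> pairwise_distinct4 i' j' k' l' ->
     (theta i j k l = theta i' j' k' l' <-> same_class4 i j k l i' j' k' l')) /\
  theta (inord 0) (inord 1) (inord 2) (inord 3) = ord0.

(* epsilon_m(r) in W = R2^6; an element w of W is represented by its        *)
(* coordinate function 'I_6 -> R2, and eps m r t is the t-th coordinate.     *)
Definition eps (K : comNzRingType) (R2 : lmodType K) (m : 'I_6) (r : R2) (t : 'I_6) : R2 :=
  if t == m then r else 0.

(* Main.v *)
Require Import Defs.
From HB Require Import structures.
From mathcomp Require Import all_boot all_order all_algebra.
From mathcomp Require Import ring.
From Stdlib Require ClassicalEpsilon.
Set Implicit Arguments. Unset Strict Implicit. Unset Printing Implicit Defensive.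
Import GRing.Theory.
Local Open Scope ring_scope.

Section Quot.
Variables (K : comNzRingType) (R : algType K) (R2 : lmodType K) (pr : R -> R2).
Hypothesis hR2 : is_quotient_R2 pr.

Lemma pr_lin k a b : pr (k *: a + b) = k *: pr a + pr b.
Proof. by case: hR2. Qed.
Lemma pr0 : pr 0 = 0.
Proof.
have := pr_lin 1 0 0; rewrite !scale1r addr0 => h.
by apply: (@addrI _ (pr 0)); rewrite addr0 -h.
Qed.
Lemma prD a b : pr (a + b) = pr a + pr b.
Proof. by have := pr_lin 1 a b; rewrite !scale1r. Qed.
Lemma prZ k a : pr (k *: a) = k *: pr a.
Proof. by rewrite -[k *: a]addr0 pr_lin pr0 addr0. Qed.
Lemma prN a : pr (- a) = - pr a.
Proof. by apply/eqP; rewrite -addr_eq0 -prD addNr pr0. Qed.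
Lemma prB a b : pr (a - b) = pr a - pr b.
Proof. by rewrite prD prN. Qed.
Lemma pr_sum I (s : seq I) (F : I -> R) : pr (\sum_(i <- s) F i) = \sum_(i <- s) pr (F i).
Proof. elim: s => [|x s IH]; first by rewrite !big_nil pr0. by rewrite !big_cons prD IH. Qed.

Lemma kerP a : pr a = 0 <-> in_I2 a.
Proof. by case: hR2 => _ [_ ]. Qed.

Lemma I2_mul (u x v : R) : in_I2 x -> in_I2 (u * x * v).
Proof.
case=> n [u0 [g [v0 [hg ->]]]].
exists n, (fun t => u * u0 t), g, (fun t => v0 t * v); split => //.
rewrite mulr_sumr mulr_suml; apply: eq_bigr => t _.
by rewrite !mulrA.
Qed.

Lemma I2_gen (g : R) : ideal_gen_I2 g -> in_I2 g.
Proof.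
move=> hg; exists 1%N, (fun _ => 1), (fun _ => g), (fun _ => 1); split => //.
by rewrite big_ord1 mul1r mulr1.
Qed.

Lemma pr_mulC a b : pr (a * b) = pr (b * a).
Proof.
apply/eqP; rewrite -subr_eq0 -prB; apply/eqP/kerP/I2_gen.
by right; exists a, b.
Qed.

Lemma pr2 a : pr a + pr a = 0.
Proof. by rewrite -prD; apply/kerP/I2_gen; left; exists a; rewrite mulr2n. Qed.

Lemma pr_mull a a' b : pr a = pr a' -> pr (a * b) = pr (a' * b).
Proof.
move=> /eqP; rewrite -subr_eq0 -prB => /eqP /kerP h.
apply/eqP; rewrite -subr_eq0 -prB -mulrBl; apply/eqP/kerP.
by have := I2_mul 1 b h; rewrite mul1r.
Qed.
Lemma pr_mulr a a' b : pr a = pr a' -> pr (b * a) = pr (b * a').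
Proof. by move=> h; rewrite pr_mulC (pr_mull _ h) pr_mulC. Qed.

Definition sec (y : R2) : R :=
  proj1_sig (ClassicalEpsilon.constructive_indefinite_description _
     (proj1 (proj2 hR2) y)).
Lemma prsec y : pr (sec y) = y.
Proof. by rewrite /sec; case: ClassicalEpsilon.constructive_indefinite_description. Qed.

Definition R2r : Type := R2.
HB.instance Definition _ := GRing.Lmodule.on R2r.
Definition mul2 (u v : R2r) : R2r := pr (sec u * sec v).
Definition one2 : R2r := pr 1.

Lemma pr_mul a b : pr (a * b) = mul2 (pr a) (pr b).
Proof. by rewrite /mul2 (pr_mull _ (esym (prsec (pr a)))) (pr_mulr _ (esym (prsec (pr b)))). Qed.

Lemma mul2A : associative mul2.
Proof. by move=> u v w; rewrite -(prsec u) -(prsec v) -(prsec w) -!pr_mul mulrA. Qed.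
Lemma mul2C : commutative mul2.
Proof. by move=> u v; rewrite -(prsec u) -(prsec v) -!pr_mul pr_mulC. Qed.
Lemma mul21 : left_id one2 mul2.
Proof. by move=> u; rewrite -(prsec u) /one2 -!pr_mul mul1r. Qed.
Lemma mul2Dl : left_distributive mul2 +%R.
Proof. by move=> u v w; rewrite -(prsec u) -(prsec v) -(prsec w) -prD -!pr_mul mulrDl prD. Qed.

HB.instance Definition _ := GRing.Zmodule_isComPzRing.Build R2r mul2A mul2C mul21 mul2Dl.

Lemma pr_mulE a b : (pr (a * b) : R2r) = (pr a : R2r) * (pr b : R2r).
Proof. exact: pr_mul. Qed.
Lemma pr1E : (pr 1 : R2r) = 1.
Proof. by []. Qed.
Lemma two0 : (2 : R2r) = 0.
Proof. by rewrite -pr1E /= -[X in _ = X](pr2 1). Qed.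
Lemma scale_mull k (u v : R2r) : (k *: u) * v = k *: (u * v).
Proof. by rewrite -(prsec u) -(prsec v) -prZ -!pr_mulE -prZ scalerAl. Qed.
Lemma scale_mulr k (u v : R2r) : u * (k *: v) = k *: (u * v).
Proof. by rewrite -(prsec u) -(prsec v) -prZ -!pr_mulE -prZ scalerAr. Qed.


Definition M := {ffun 'I_4 * 'I_4 -> R2r}.
Definition mmul (A C : M) : M := [ffun p => \sum_(m < 4) A (p.1, m) * C (m, p.2)].
Definition brM (A C : M) : M := mmul A C - mmul C A.

Lemma mmulDl A B C : mmul (A + B) C = mmul A C + mmul B C.
Proof. apply/ffunP => p; rewrite !ffunE -big_split; apply: eq_bigr => m _; by rewrite !ffunE mulrDl. Qed.
Lemma mmulDr A B C : mmul C (A + B) = mmul C A + mmul C B.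
Proof. apply/ffunP => p; rewrite !ffunE -big_split; apply: eq_bigr => m _; by rewrite !ffunE mulrDr. Qed.
Lemma mmulZl k A C : mmul (k *: A) C = k *: mmul A C.
Proof. apply/ffunP => p; rewrite !ffunE scaler_sumr; apply: eq_bigr => m _; by rewrite !ffunE scale_mull. Qed.
Lemma mmulZr k A C : mmul C (k *: A) = k *: mmul C A.
Proof. apply/ffunP => p; rewrite !ffunE scaler_sumr; apply: eq_bigr => m _; by rewrite !ffunE scale_mulr. Qed.
Lemma mmulNl A C : mmul (- A) C = - mmul A C.
Proof. apply/ffunP => p; rewrite !ffunE -sumrN; apply: eq_bigr => m _; by rewrite !ffunE mulNr. Qed.
Lemma mmulNr A C : mmul C (- A) = - mmul C A.
Proof. apply/ffunP => p; rewrite !ffunE -sumrN; apply: eq_bigr => m _; by rewrite !ffunE mulrN. Qed.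
Lemma mmulA A C D : mmul A (mmul C D) = mmul (mmul A C) D.
Proof.
apply/ffunP => p; rewrite !ffunE.
under eq_bigr => m _ do rewrite ffunE mulr_sumr.
rewrite exchange_big; apply: eq_bigr => n _; rewrite ffunE mulr_suml.
by apply: eq_bigr => m _; rewrite mulrA.
Qed.

Lemma brM_linl k x y z : brM (k *: x + y) z = k *: brM x z + brM y z.
Proof.
rewrite /brM mmulDl mmulDr mmulZl mmulZr.
apply/ffunP => p; rewrite !ffunE; by rewrite scalerBr opprD addrACA.
Qed.
Lemma mD (f g : M) p : (f + g) p = f p + g p. Proof. by rewrite ffunE. Qed.
Lemma mN (f : M) p : (- f) p = - f p. Proof. by rewrite ffunE. Qed.
Lemma mZ k (f : M) p : (k *: f) p = k *: f p. Proof. by rewrite ffunE. Qed.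
Lemma m0 p : (0 : M) p = 0. Proof. by rewrite ffunE. Qed.

Lemma brM_linr k x y z : brM x (k *: y + z) = k *: brM x y + brM x z.
Proof.
rewrite /brM mmulDl mmulDr mmulZl mmulZr.
apply/ffunP => p; rewrite !(mD, mN, mZ); by rewrite scalerBr opprD addrACA.
Qed.

Lemma brM_leib x y z : brM x (brM y z) = brM (brM x y) z - brM (brM x z) y.
Proof.
rewrite /brM !(mmulDl, mmulDr, mmulNl, mmulNr) !mmulA.
apply/ffunP => p; rewrite !(mD, mN). ring.
Qed.
Definition Ym (i j : 'I_4) (a : R) : M := [ffun p => if p == (i, j) then (pr a : R2r) else 0].

Lemma mmulY i j k l a b : mmul (Ym i j a) (Ym k l b) = if j == k then Ym i l (a * b) else 0.
Proof.
apply/ffunP => -[p q]; rewrite !ffunE /=.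
rewrite (bigD1 j) //= big1 => [|m hm]; last by rewrite !ffunE xpair_eqE (negbTE hm) andbF mul0r.
rewrite !ffunE !xpair_eqE eqxx andbT addr0.
case: (j =P k) => [ejk|hjk]; last by rewrite /= mulr0 ffunE.
subst k; rewrite ffunE xpair_eqE /=.
by case: (p == i); case: (q == l); rewrite /= ?mul0r ?mulr0 ?pr_mulE.
Qed.

Lemma Ym_lin i j k a b : Ym i j (k *: a + b) = k *: Ym i j a + Ym i j b.
Proof.
apply/ffunP => p; rewrite !(mD, mZ) !ffunE.
by case: (p == (i, j)); rewrite ?pr_lin // scaler0 addr0.
Qed.

Lemma brM_rel2 i j k a b : i != j -> j != k -> i != k ->
  brM (Ym i j a) (Ym j k b) = Ym i k (a * b).
Proof. by move=> hij hjk hik; rewrite /brM !mmulY eqxx eq_sym (negbTE hik) subr0. Qed.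
Lemma brM_rel3 i j k a b : i != j -> j != k -> i != k ->
  brM (Ym i j a) (Ym k i b) = - Ym k j (b * a).
Proof. by move=> hij hjk hik; rewrite /brM !mmulY eqxx (negbTE hjk) sub0r. Qed.
Lemma brM_rel4 i j k l a b : i != j -> k != l -> j != k -> i != l ->
  brM (Ym i j a) (Ym k l b) = 0.
Proof. by move=> hij hkl hjk hil; rewrite /brM !mmulY (negbTE hjk) eq_sym (negbTE hil) subrr. Qed.

Lemma M_leibniz : is_leibniz brM.
Proof. split; [exact: brM_linl | split; [exact: brM_linr | exact: brM_leib]]. Qed.
Lemma M_rel : stl4_relations brM Ym.
Proof.
split; first by move=> i j _ k a b; exact: Ym_lin.
split; first by move=> i j k hij hjk hik a b; exact: brM_rel2.
split; first by move=> i j k hij hjk hik a b; exact: brM_rel3.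
by move=> i j k l hij hkl hjk hil a b; exact: brM_rel4.
Qed.

Definition o0 : 'I_4 := @Ordinal 4 0 isT.
Definition o1 : 'I_4 := @Ordinal 4 1 isT.
Definition o2 : 'I_4 := @Ordinal 4 2 isT.
Definition o3 : 'I_4 := @Ordinal 4 3 isT.
Lemma sum4 (V : zmodType) (F : 'I_4 -> V) : \sum_(i < 4) F i = F o0 + F o1 + F o2 + F o3.
Proof.
rewrite !big_ord_recl big_ord0 addr0 !addrA.
by congr (_ + _ + _ + _); congr F; apply: val_inj.
Qed.

Definition trM (A : M) : R2r := A (o0,o0) + A (o1,o1) + A (o2,o2) + A (o3,o3).
Lemma trM3 A : trM A = 0 -> A (o3,o3) = - (A (o0,o0) + A (o1,o1) + A (o2,o2)).
Proof. by move=> h; apply/eqP; rewrite -addr_eq0 addrC; apply/eqP. Qed.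
Lemma brME (C D : M) p : brM C D p =
  \sum_(m < 4) C (p.1, m) * D (m, p.2) - \sum_(m < 4) D (p.1, m) * C (m, p.2).
Proof. by rewrite /brM mD mN !ffunE. Qed.
Definition dl (b : bool) : R2r := if b then 1 else 0.
Lemma epsE m (r : R2r) t : eps m r t = dl (t == m) * r.
Proof. by rewrite /eps /dl; case: (t == m); rewrite ?mul1r ?mul0r. Qed.

Variables (theta : 'I_4 -> 'I_4 -> 'I_4 -> 'I_4 -> 'I_6).
Hypothesis htheta : is_class_labelling theta.

Lemma thE i j k l i' j' k' l' : pairwise_distinct4 i j k l -> pairwise_distinct4 i' j' k' l' ->
  same_class4 i j k l i' j' k' l' -> theta i j k l = theta i' j' k' l'.
Proof. by move=> h1 h2 h3; apply/(proj1 htheta _ _ _ _ _ _ _ _ h1 h2). Qed.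

Definition Bf t (A C : M) : R2r :=
  \sum_(i < 4) \sum_(j < 4) \sum_(k < 4) \sum_(l < 4)
    (if pairwise_distinct4 i j k l then eps (theta i j k l) (A (i, j) * C (k, l)) t else 0).

Lemma th0 : theta o0 o2 o3 o1 = theta o0 o1 o3 o2.
Proof. by apply: thE => //; apply: Or43. Qed.
Lemma th1 : theta o0 o3 o1 o2 = theta o0 o2 o1 o3.
Proof. by apply: thE => //; apply: Or43. Qed.
Lemma th2 : theta o0 o3 o2 o1 = theta o0 o1 o2 o3.
Proof. by apply: thE => //; apply: Or43. Qed.
Lemma th3 : theta o1 o2 o0 o3 = theta o0 o2 o1 o3.
Proof. by apply: thE => //; apply: Or42. Qed.
Lemma th4 : theta o1 o2 o3 o0 = theta o1 o0 o3 o2.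
Proof. by apply: thE => //; apply: Or43. Qed.
Lemma th5 : theta o1 o3 o0 o2 = theta o0 o2 o1 o3.
Proof. by apply: thE => //; apply: Or44. Qed.
Lemma th6 : theta o1 o3 o2 o0 = theta o1 o0 o2 o3.
Proof. by apply: thE => //; apply: Or43. Qed.
Lemma th7 : theta o2 o0 o1 o3 = theta o1 o0 o2 o3.
Proof. by apply: thE => //; apply: Or42. Qed.
Lemma th8 : theta o2 o1 o0 o3 = theta o0 o1 o2 o3.
Proof. by apply: thE => //; apply: Or42. Qed.
Lemma th9 : theta o2 o1 o3 o0 = theta o2 o0 o3 o1.
Proof. by apply: thE => //; apply: Or43. Qed.
Lemma th10 : theta o2 o3 o0 o1 = theta o0 o1 o2 o3.
Proof. by apply: thE => //; apply: Or44. Qed.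
Lemma th11 : theta o2 o3 o1 o0 = theta o1 o0 o2 o3.
Proof. by apply: thE => //; apply: Or44. Qed.
Lemma th12 : theta o3 o0 o1 o2 = theta o1 o0 o3 o2.
Proof. by apply: thE => //; apply: Or42. Qed.
Lemma th13 : theta o3 o0 o2 o1 = theta o2 o0 o3 o1.
Proof. by apply: thE => //; apply: Or42. Qed.
Lemma th14 : theta o3 o1 o0 o2 = theta o0 o1 o3 o2.
Proof. by apply: thE => //; apply: Or42. Qed.
Lemma th15 : theta o3 o1 o2 o0 = theta o2 o0 o3 o1.
Proof. by apply: thE => //; apply: Or44. Qed.
Lemma th16 : theta o3 o2 o0 o1 = theta o0 o1 o3 o2.
Proof. by apply: thE => //; apply: Or44. Qed.
Lemma th17 : theta o3 o2 o1 o0 = theta o1 o0 o3 o2.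
Proof. by apply: thE => //; apply: Or44. Qed.
Definition beta0 (A C : M) : R2r := A (o0,o1) * C (o2,o3) + A (o2,o1) * C (o0,o3) + A (o0,o3) * C (o2,o1) + A (o2,o3) * C (o0,o1).
Definition beta1 (A C : M) : R2r := A (o0,o1) * C (o3,o2) + A (o3,o1) * C (o0,o2) + A (o0,o2) * C (o3,o1) + A (o3,o2) * C (o0,o1).
Definition beta2 (A C : M) : R2r := A (o0,o2) * C (o1,o3) + A (o1,o2) * C (o0,o3) + A (o0,o3) * C (o1,o2) + A (o1,o3) * C (o0,o2).
Definition beta3 (A C : M) : R2r := A (o1,o0) * C (o2,o3) + A (o2,o0) * C (o1,o3) + A (o1,o3) * C (o2,o0) + A (o2,o3) * C (o1,o0).
Definition beta4 (A C : M) : R2r := A (o1,o0) * C (o3,o2) + A (o3,o0) * C (o1,o2) + A (o1,o2) * C (o3,o0) + A (o3,o2) * C (o1,o0).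
Definition beta5 (A C : M) : R2r := A (o2,o0) * C (o3,o1) + A (o3,o0) * C (o2,o1) + A (o2,o1) * C (o3,o0) + A (o3,o1) * C (o2,o0).
Lemma B_split t (A C : M) : Bf t A C = dl (t == theta o0 o1 o2 o3) * beta0 A C + dl (t == theta o0 o1 o3 o2) * beta1 A C + dl (t == theta o0 o2 o1 o3) * beta2 A C + dl (t == theta o1 o0 o2 o3) * beta3 A C + dl (t == theta o1 o0 o3 o2) * beta4 A C + dl (t == theta o2 o0 o3 o1) * beta5 A C.
Proof.
rewrite /Bf !sum4 /= !epsE !(th0, th1, th2, th3, th4, th5, th6, th7, th8, th9, th10, th11, th12, th13, th14, th15, th16, th17).
rewrite /beta0 /beta1 /beta2 /beta3 /beta4 /beta5. ring.
Qed.
Lemma beta0_cocycle (A C D : M) : trM A = 0 -> trM C = 0 -> trM D = 0 ->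
  beta0 A (brM C D) + beta0 (brM A D) C - beta0 (brM A C) D = 0.
Proof.
move=> hA hC hD; rewrite /beta0 !brME /= !sum4 /=.
rewrite (trM3 hA) (trM3 hC) (trM3 hD).
transitivity (2 * (0 - (A (o0,o0) * C (o0,o3) * D (o2,o1)) + (A (o0,o0) * C (o2,o1) * D (o0,o3)) + (A (o0,o1) * C (o0,o0) * D (o2,o3)) - (A (o0,o1) * C (o0,o3) * D (o2,o0)) - (A (o0,o1) * C (o1,o3) * D (o2,o1)) + (A (o0,o1) * C (o2,o0) * D (o0,o3)) + (A (o0,o1) * C (o2,o1) * D (o1,o3)) + (A (o0,o1) * C (o2,o2) * D (o2,o3)) - (A (o0,o1) * C (o2,o3) * D (o0,o0)) - (A (o0,o1) * C (o2,o3) * D (o2,o2)) + (A (o0,o3) * C (o0,o0) * D (o2,o1)) - (A (o0,o3) * C (o0,o1) * D (o2,o0)) + (A (o0,o3) * C (o2,o0) * D (o0,o1)) - (A (o0,o3) * C (o2,o1) * D (o0,o0)) - (A (o0,o3) * C (o2,o1) * D (o2,o2)) + (A (o0,o3) * C (o2,o2) * D (o2,o1)) + (A (o0,o3) * C (o2,o3) * D (o3,o1)) - (A (o0,o3) * C (o3,o1) * D (o2,o3)) + (A (o1,o1) * C (o0,o1) * D (o2,o3)) - (A (o1,o1) * C (o0,o3) * D (o2,o1)) + (A (o1,o1) * C (o2,o1) * D (o0,o3)) - (A (o1,o1) * C (o2,o3) * D (o0,o1)) + (A (o2,o1) * C (o0,o0) * D (o0,o3)) + (A (o2,o1) * C (o0,o1)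 * D (o1,o3)) + (A (o2,o1) * C (o0,o2) * D (o2,o3)) - (A (o2,o1) * C (o0,o3) * D (o0,o0)) - (A (o2,o1) * C (o0,o3) * D (o2,o2)) - (A (o2,o1) * C (o1,o3) * D (o0,o1)) + (A (o2,o1) * C (o2,o2) * D (o0,o3)) - (A (o2,o1) * C (o2,o3) * D (o0,o2)) + (A (o2,o2) * C (o0,o1) * D (o2,o3)) - (A (o2,o2) * C (o2,o3) * D (o0,o1)) + (A (o2,o3) * C (o0,o0) * D (o0,o1)) - (A (o2,o3) * C (o0,o1) * D (o0,o0)) - (A (o2,o3) * C (o0,o1) * D (o2,o2)) + (A (o2,o3) * C (o0,o2) * D (o2,o1)) + (A (o2,o3) * C (o0,o3) * D (o3,o1)) - (A (o2,o3) * C (o2,o1) * D (o0,o2)) + (A (o2,o3) * C (o2,o2) * D (o0,o1)) - (A (o2,o3) * C (o3,o1) * D (o0,o3)))); first by ring.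
by rewrite two0 mul0r.
Qed.
Lemma beta1_cocycle (A C D : M) : trM A = 0 -> trM C = 0 -> trM D = 0 ->
  beta1 A (brM C D) + beta1 (brM A D) C - beta1 (brM A C) D = 0.
Proof.
move=> hA hC hD; rewrite /beta1 !brME /= !sum4 /=.
rewrite (trM3 hA) (trM3 hC) (trM3 hD).
transitivity (2 * (0 - (A (o0,o0) * C (o0,o1) * D (o3,o2)) - (A (o0,o0) * C (o0,o2) * D (o3,o1)) + (A (o0,o0) * C (o3,o1) * D (o0,o2)) + (A (o0,o0) * C (o3,o2) * D (o0,o1)) - (A (o0,o1) * C (o0,o2) * D (o3,o0)) - (A (o0,o1) * C (o1,o1) * D (o3,o2)) - (A (o0,o1) * C (o1,o2) * D (o3,o1)) - (A (o0,o1) * C (o2,o2) * D (o3,o2)) + (A (o0,o1) * C (o3,o0) * D (o0,o2)) + (A (o0,o1) * C (o3,o1) * D (o1,o2)) + (A (o0,o1) * C (o3,o2) * D (o1,o1)) + (A (o0,o1) * C (o3,o2) * D (o2,o2)) - (A (o0,o2) * C (o0,o1) * D (o3,o0)) - (A (o0,o2) * C (o1,o1) * D (o3,o1)) - (A (o0,o2) * C (o2,o1) * D (o3,o2)) - (A (o0,o2) * C (o2,o2) * D (o3,o1)) + (A (o0,o2) * C (o3,o0) * D (o0,o1)) + (A (o0,o2) * C (o3,o1) * D (o1,o1)) + (A (o0,o2) * C (o3,o1) * D (o2,o2)) + (A (o0,o2) * C (o3,o2) * D (o2,o1)) - (A (o1,o1) * C (o0,o2) * D (o3,o1)) + (A (o1,o1)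 * C (o3,o1) * D (o0,o2)) - (A (o2,o2) * C (o0,o1) * D (o3,o2)) + (A (o2,o2) * C (o3,o2) * D (o0,o1)) + (A (o3,o1) * C (o0,o1) * D (o1,o2)) + (A (o3,o1) * C (o0,o2) * D (o1,o1)) + (A (o3,o1) * C (o0,o2) * D (o2,o2)) + (A (o3,o1) * C (o0,o3) * D (o3,o2)) - (A (o3,o1) * C (o1,o1) * D (o0,o2)) - (A (o3,o1) * C (o1,o2) * D (o0,o1)) - (A (o3,o1) * C (o2,o2) * D (o0,o2)) - (A (o3,o1) * C (o3,o2) * D (o0,o3)) + (A (o3,o2) * C (o0,o1) * D (o1,o1)) + (A (o3,o2) * C (o0,o1) * D (o2,o2)) + (A (o3,o2) * C (o0,o2) * D (o2,o1)) + (A (o3,o2) * C (o0,o3) * D (o3,o1)) - (A (o3,o2) * C (o1,o1) * D (o0,o1)) - (A (o3,o2) * C (o2,o1) * D (o0,o2)) - (A (o3,o2) * C (o2,o2) * D (o0,o1)) - (A (o3,o2) * C (o3,o1) * D (o0,o3)))); first by ring.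
by rewrite two0 mul0r.
Qed.
Lemma beta2_cocycle (A C D : M) : trM A = 0 -> trM C = 0 -> trM D = 0 ->
  beta2 A (brM C D) + beta2 (brM A D) C - beta2 (brM A C) D = 0.
Proof.
move=> hA hC hD; rewrite /beta2 !brME /= !sum4 /=.
rewrite (trM3 hA) (trM3 hC) (trM3 hD).
transitivity (2 * (0 - (A (o0,o0) * C (o0,o3) * D (o1,o2)) + (A (o0,o0) * C (o1,o2) * D (o0,o3)) + (A (o0,o2) * C (o0,o0) * D (o1,o3)) - (A (o0,o2) * C (o0,o3) * D (o1,o0)) + (A (o0,o2) * C (o1,o0) * D (o0,o3)) + (A (o0,o2) * C (o1,o1) * D (o1,o3)) + (A (o0,o2) * C (o1,o2) * D (o2,o3)) - (A (o0,o2) * C (o1,o3) * D (o0,o0)) - (A (o0,o2) * C (o1,o3) * D (o1,o1)) - (A (o0,o2) * C (o2,o3) * D (o1,o2)) + (A (o0,o3) * C (o0,o0) * D (o1,o2)) - (A (o0,o3) * C (o0,o2) * D (o1,o0)) + (A (o0,o3) * C (o1,o0) * D (o0,o2)) + (A (o0,o3) * C (o1,o1) * D (o1,o2)) - (A (o0,o3) * C (o1,o2) * D (o0,o0)) - (A (o0,o3) * C (o1,o2) * D (o1,o1)) + (A (o0,o3) * C (o1,o3) * D (o3,o2)) - (A (o0,o3) * C (o3,o2) * D (o1,o3)) + (A (o1,o1) * C (o0,o2) * D (o1,o3)) - (A (o1,o1) * C (o1,o3) * D (o0,o2)) + (A (o1,o2) * C (o0,o0) * D (o0,o3)) + (A (o1,o2)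 * C (o0,o1) * D (o1,o3)) + (A (o1,o2) * C (o0,o2) * D (o2,o3)) - (A (o1,o2) * C (o0,o3) * D (o0,o0)) - (A (o1,o2) * C (o0,o3) * D (o1,o1)) + (A (o1,o2) * C (o1,o1) * D (o0,o3)) - (A (o1,o2) * C (o1,o3) * D (o0,o1)) - (A (o1,o2) * C (o2,o3) * D (o0,o2)) + (A (o1,o3) * C (o0,o0) * D (o0,o2)) + (A (o1,o3) * C (o0,o1) * D (o1,o2)) - (A (o1,o3) * C (o0,o2) * D (o0,o0)) - (A (o1,o3) * C (o0,o2) * D (o1,o1)) + (A (o1,o3) * C (o0,o3) * D (o3,o2)) + (A (o1,o3) * C (o1,o1) * D (o0,o2)) - (A (o1,o3) * C (o1,o2) * D (o0,o1)) - (A (o1,o3) * C (o3,o2) * D (o0,o3)) + (A (o2,o2) * C (o0,o2) * D (o1,o3)) - (A (o2,o2) * C (o0,o3) * D (o1,o2)) + (A (o2,o2) * C (o1,o2) * D (o0,o3)) - (A (o2,o2) * C (o1,o3) * D (o0,o2)))); first by ring.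
by rewrite two0 mul0r.
Qed.
Lemma beta3_cocycle (A C D : M) : trM A = 0 -> trM C = 0 -> trM D = 0 ->
  beta3 A (brM C D) + beta3 (brM A D) C - beta3 (brM A C) D = 0.
Proof.
move=> hA hC hD; rewrite /beta3 !brME /= !sum4 /=.
rewrite (trM3 hA) (trM3 hC) (trM3 hD).
transitivity (2 * (0 + (A (o0,o0) * C (o1,o0) * D (o2,o3)) - (A (o0,o0) * C (o1,o3) * D (o2,o0)) + (A (o0,o0) * C (o2,o0) * D (o1,o3)) - (A (o0,o0) * C (o2,o3) * D (o1,o0)) - (A (o1,o0) * C (o0,o3) * D (o2,o0)) + (A (o1,o0) * C (o1,o1) * D (o2,o3)) - (A (o1,o0) * C (o1,o3) * D (o2,o1)) + (A (o1,o0) * C (o2,o0) * D (o0,o3)) + (A (o1,o0) * C (o2,o1) * D (o1,o3)) + (A (o1,o0) * C (o2,o2) * D (o2,o3)) - (A (o1,o0) * C (o2,o3) * D (o1,o1)) - (A (o1,o0) * C (o2,o3) * D (o2,o2)) - (A (o1,o1) * C (o1,o3) * D (o2,o0)) + (A (o1,o1) * C (o2,o0) * D (o1,o3)) - (A (o1,o3) * C (o1,o0) * D (o2,o1)) + (A (o1,o3) * C (o1,o1) * D (o2,o0)) - (A (o1,o3) * C (o2,o0) * D (o1,o1)) - (A (o1,o3) * C (o2,o0) * D (o2,o2)) + (A (o1,o3) * C (o2,o1) * D (o1,o0)) + (A (o1,o3) * C (o2,o2) * D (o2,o0)) + (A (o1,o3) * C (o2,o3) * D (o3,o0)) - (A (o1,o3)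 * C (o3,o0) * D (o2,o3)) - (A (o2,o0) * C (o0,o3) * D (o1,o0)) + (A (o2,o0) * C (o1,o0) * D (o0,o3)) + (A (o2,o0) * C (o1,o1) * D (o1,o3)) + (A (o2,o0) * C (o1,o2) * D (o2,o3)) - (A (o2,o0) * C (o1,o3) * D (o1,o1)) - (A (o2,o0) * C (o1,o3) * D (o2,o2)) + (A (o2,o0) * C (o2,o2) * D (o1,o3)) - (A (o2,o0) * C (o2,o3) * D (o1,o2)) + (A (o2,o2) * C (o1,o0) * D (o2,o3)) - (A (o2,o2) * C (o2,o3) * D (o1,o0)) - (A (o2,o3) * C (o1,o0) * D (o1,o1)) - (A (o2,o3) * C (o1,o0) * D (o2,o2)) + (A (o2,o3) * C (o1,o1) * D (o1,o0)) + (A (o2,o3) * C (o1,o2) * D (o2,o0)) + (A (o2,o3) * C (o1,o3) * D (o3,o0)) - (A (o2,o3) * C (o2,o0) * D (o1,o2)) + (A (o2,o3) * C (o2,o2) * D (o1,o0)) - (A (o2,o3) * C (o3,o0) * D (o1,o3)))); first by ring.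
by rewrite two0 mul0r.
Qed.
Lemma beta4_cocycle (A C D : M) : trM A = 0 -> trM C = 0 -> trM D = 0 ->
  beta4 A (brM C D) + beta4 (brM A D) C - beta4 (brM A C) D = 0.
Proof.
move=> hA hC hD; rewrite /beta4 !brME /= !sum4 /=.
rewrite (trM3 hA) (trM3 hC) (trM3 hD).
transitivity (2 * (0 - (A (o0,o0) * C (o1,o2) * D (o3,o0)) + (A (o0,o0) * C (o3,o0) * D (o1,o2)) - (A (o1,o0) * C (o0,o0) * D (o3,o2)) - (A (o1,o0) * C (o0,o2) * D (o3,o0)) - (A (o1,o0) * C (o1,o2) * D (o3,o1)) - (A (o1,o0) * C (o2,o2) * D (o3,o2)) + (A (o1,o0) * C (o3,o0) * D (o0,o2)) + (A (o1,o0) * C (o3,o1) * D (o1,o2)) + (A (o1,o0) * C (o3,o2) * D (o0,o0)) + (A (o1,o0) * C (o3,o2) * D (o2,o2)) - (A (o1,o1) * C (o1,o0) * D (o3,o2)) - (A (o1,o1) * C (o1,o2) * D (o3,o0)) + (A (o1,o1) * C (o3,o0) * D (o1,o2)) + (A (o1,o1) * C (o3,o2) * D (o1,o0)) - (A (o1,o2) * C (o0,o0) * D (o3,o0)) - (A (o1,o2) * C (o1,o0) * D (o3,o1)) - (A (o1,o2) * C (o2,o0) * D (o3,o2)) - (A (o1,o2) * C (o2,o2) * D (o3,o0)) + (A (o1,o2) * C (o3,o0) * D (o0,o0)) + (A (o1,o2) * C (o3,o0) * D (o2,o2)) + (A (o1,o2) * C (o3,o1) * D (o1,o0)) + (A (o1,o2)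 * C (o3,o2) * D (o2,o0)) - (A (o2,o2) * C (o1,o0) * D (o3,o2)) + (A (o2,o2) * C (o3,o2) * D (o1,o0)) - (A (o3,o0) * C (o0,o0) * D (o1,o2)) - (A (o3,o0) * C (o0,o2) * D (o1,o0)) + (A (o3,o0) * C (o1,o0) * D (o0,o2)) + (A (o3,o0) * C (o1,o2) * D (o0,o0)) + (A (o3,o0) * C (o1,o2) * D (o2,o2)) + (A (o3,o0) * C (o1,o3) * D (o3,o2)) - (A (o3,o0) * C (o2,o2) * D (o1,o2)) - (A (o3,o0) * C (o3,o2) * D (o1,o3)) - (A (o3,o2) * C (o0,o0) * D (o1,o0)) + (A (o3,o2) * C (o1,o0) * D (o0,o0)) + (A (o3,o2) * C (o1,o0) * D (o2,o2)) + (A (o3,o2) * C (o1,o2) * D (o2,o0)) + (A (o3,o2) * C (o1,o3) * D (o3,o0)) - (A (o3,o2) * C (o2,o0) * D (o1,o2)) - (A (o3,o2) * C (o2,o2) * D (o1,o0)) - (A (o3,o2) * C (o3,o0) * D (o1,o3)))); first by ring.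
by rewrite two0 mul0r.
Qed.
Lemma beta5_cocycle (A C D : M) : trM A = 0 -> trM C = 0 -> trM D = 0 ->
  beta5 A (brM C D) + beta5 (brM A D) C - beta5 (brM A C) D = 0.
Proof.
move=> hA hC hD; rewrite /beta5 !brME /= !sum4 /=.
rewrite (trM3 hA) (trM3 hC) (trM3 hD).
transitivity (2 * (0 - (A (o0,o0) * C (o2,o1) * D (o3,o0)) + (A (o0,o0) * C (o3,o0) * D (o2,o1)) - (A (o1,o1) * C (o2,o0) * D (o3,o1)) + (A (o1,o1) * C (o3,o1) * D (o2,o0)) - (A (o2,o0) * C (o0,o0) * D (o3,o1)) - (A (o2,o0) * C (o0,o1) * D (o3,o0)) - (A (o2,o0) * C (o1,o1) * D (o3,o1)) - (A (o2,o0) * C (o2,o1) * D (o3,o2)) + (A (o2,o0) * C (o3,o0) * D (o0,o1)) + (A (o2,o0) * C (o3,o1) * D (o0,o0)) + (A (o2,o0) * C (o3,o1) * D (o1,o1)) + (A (o2,o0) * C (o3,o2) * D (o2,o1)) - (A (o2,o1) * C (o0,o0) * D (o3,o0)) - (A (o2,o1) * C (o1,o0) * D (o3,o1)) - (A (o2,o1) * C (o1,o1) * D (o3,o0)) - (A (o2,o1) * C (o2,o0) * D (o3,o2)) + (A (o2,o1) * C (o3,o0) * D (o0,o0)) + (A (o2,o1) * C (o3,o0) * D (o1,o1)) + (A (o2,o1) * C (o3,o1) * D (o1,o0)) + (A (o2,o1) * C (o3,o2) * D (o2,o0)) - (A (o2,o2) * C (o2,o0) * D (o3,o1)) - (A (o2,o2)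 * C (o2,o1) * D (o3,o0)) + (A (o2,o2) * C (o3,o0) * D (o2,o1)) + (A (o2,o2) * C (o3,o1) * D (o2,o0)) - (A (o3,o0) * C (o0,o0) * D (o2,o1)) - (A (o3,o0) * C (o0,o1) * D (o2,o0)) - (A (o3,o0) * C (o1,o1) * D (o2,o1)) + (A (o3,o0) * C (o2,o0) * D (o0,o1)) + (A (o3,o0) * C (o2,o1) * D (o0,o0)) + (A (o3,o0) * C (o2,o1) * D (o1,o1)) + (A (o3,o0) * C (o2,o3) * D (o3,o1)) - (A (o3,o0) * C (o3,o1) * D (o2,o3)) - (A (o3,o1) * C (o0,o0) * D (o2,o0)) - (A (o3,o1) * C (o1,o0) * D (o2,o1)) - (A (o3,o1) * C (o1,o1) * D (o2,o0)) + (A (o3,o1) * C (o2,o0) * D (o0,o0)) + (A (o3,o1) * C (o2,o0) * D (o1,o1)) + (A (o3,o1) * C (o2,o1) * D (o1,o0)) + (A (o3,o1) * C (o2,o3) * D (o3,o0)) - (A (o3,o1) * C (o3,o0) * D (o2,o3)))); first by ring.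
by rewrite two0 mul0r.
Qed.
Lemma Bf_cocycle t (A C D : M) : trM A = 0 -> trM C = 0 -> trM D = 0 ->
  Bf t A (brM C D) + Bf t (brM A D) C - Bf t (brM A C) D = 0.
Proof.
move=> hA hC hD; rewrite !B_split.
transitivity (dl (t == theta o0 o1 o2 o3) * (beta0 A (brM C D) + beta0 (brM A D) C - beta0 (brM A C) D) + dl (t == theta o0 o1 o3 o2) * (beta1 A (brM C D) + beta1 (brM A D) C - beta1 (brM A C) D) + dl (t == theta o0 o2 o1 o3) * (beta2 A (brM C D) + beta2 (brM A D) C - beta2 (brM A C) D) + dl (t == theta o1 o0 o2 o3) * (beta3 A (brM C D) + beta3 (brM A D) C - beta3 (brM A C) D) + dl (t == theta o1 o0 o3 o2) * (beta4 A (brM C D) + beta4 (brM A D) C - beta4 (brM A C) D) + dl (t == theta o2 o0 o3 o1) * (beta5 A (brM C D) + beta5 (brM A D) C - beta5 (brM A C) D)); first by ring.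
by rewrite (beta0_cocycle hA hC hD) (beta1_cocycle hA hC hD) (beta2_cocycle hA hC hD) (beta3_cocycle hA hC hD) (beta4_cocycle hA hC hD) (beta5_cocycle hA hC hD) !mulr0 !addr0.
Qed.

Lemma trM_brM (A C : M) : trM (brM A C) = 0.
Proof. rewrite /trM !brME /= !sum4 /=; ring. Qed.
Lemma trMD (A C : M) : trM (A + C) = trM A + trM C.
Proof. rewrite /trM !mD; ring. Qed.
Lemma trM0 : trM 0 = 0.
Proof. rewrite /trM !m0; ring. Qed.
Lemma trMY i j a : i != j -> trM (Ym i j a) = 0.
Proof.
move=> hij; have h : forall p, (p, p) == (i, j) = false.
  move=> p; apply/negbTE; apply: contra hij => /eqP [<- <-]; by [].
by rewrite /trM !ffunE !h; ring.
Qed.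

Lemma BfDl t (A A' C : M) : Bf t (A + A') C = Bf t A C + Bf t A' C.
Proof. rewrite !B_split /beta0 /beta1 /beta2 /beta3 /beta4 /beta5 !mD; ring. Qed.
Lemma BfDr t (A C C' : M) : Bf t A (C + C') = Bf t A C + Bf t A C'.
Proof. rewrite !B_split /beta0 /beta1 /beta2 /beta3 /beta4 /beta5 !mD; ring. Qed.
Lemma Bf0l t (C : M) : Bf t 0 C = 0.
Proof. rewrite !B_split /beta0 /beta1 /beta2 /beta3 /beta4 /beta5 !m0; ring. Qed.
Lemma Bf0r t (C : M) : Bf t C 0 = 0.
Proof. rewrite !B_split /beta0 /beta1 /beta2 /beta3 /beta4 /beta5 !m0; ring. Qed.

Lemma sum_single (V : zmodType) (G : 'I_4 -> V) i :
  (forall p, p != i -> G p = 0) -> \sum_(p < 4) G p = G i.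
Proof. by move=> h; rewrite (bigD1 i) //= big1 ?addr0 // => p /h. Qed.

Lemma summand0 t (A C : M) p q r s : A (p, q) * C (r, s) = 0 ->
  (if pairwise_distinct4 p q r s then eps (theta p q r s) (A (p, q) * C (r, s)) t else 0) = 0.
Proof. by move=> h; rewrite h /eps; case: ifP => //; case: ifP. Qed.

Lemma Bf_diagl t (A C : M) : (forall p q, p != q -> A (p, q) = 0) -> Bf t A C = 0.
Proof.
move=> h; rewrite /Bf big1 // => p _; rewrite big1 // => q _; rewrite big1 // => r _;
rewrite big1 // => s _.
case hpd: (pairwise_distinct4 p q r s) => //.
have hpq : p != q by move: hpd; rewrite /pairwise_distinct4 => /and4P [].
by rewrite h // mul0r /eps; case: ifP.
Qed.
Lemma Bf_diagr t (A C : M) : (forall p q, p != q -> C (p, q) = 0) -> Bf t A C = 0.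
Proof.
move=> h; rewrite /Bf big1 // => p _; rewrite big1 // => q _; rewrite big1 // => r _;
rewrite big1 // => s _.
case hpd: (pairwise_distinct4 p q r s) => //.
have hrs : r != s by move: hpd; rewrite /pairwise_distinct4 => /and4P [_ _ _ /andP [_ /andP [_ ->]]].
by rewrite h // mulr0 /eps; case: ifP.
Qed.

Lemma Ym_off i j a b p q : i != j -> p != q -> brM (Ym i j a) (Ym j i b) (p, q) = 0.
Proof.
move=> hij hpq; rewrite /brM !mmulY !eqxx mD mN !ffunE !xpair_eqE.
have h : forall u, (p == u) && (q == u) = false.
  by move=> u; apply/negbTE; apply: contra hpq => /andP [/eqP -> /eqP ->].
by rewrite !h subrr.
Qed.

Lemma Bf_YY t i j k l a b :
  Bf t (Ym i j a) (Ym k l b) =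
  if pairwise_distinct4 i j k l then eps (theta i j k l) (pr (a * b)) t else 0.
Proof.
rewrite /Bf (@sum_single _ _ i) => [|p hp]; last first.
  rewrite big1 // => q _; rewrite big1 // => r _; rewrite big1 // => s _.
  by rewrite summand0 // !ffunE xpair_eqE (negbTE hp) mul0r.
rewrite (@sum_single _ _ j) => [|q hq]; last first.
  rewrite big1 // => r _; rewrite big1 // => s _.
  by rewrite summand0 // !ffunE xpair_eqE (negbTE hq) andbF mul0r.
rewrite (@sum_single _ _ k) => [|r hr]; last first.
  rewrite big1 // => s _.
  by rewrite summand0 // !ffunE !xpair_eqE (negbTE hr) mulr0.
rewrite (@sum_single _ _ l) => [|s hs]; last first.
  by rewrite summand0 // !ffunE !xpair_eqE (negbTE hs) andbF mulr0.
by rewrite !ffunE !eqxx pr_mulE.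
Qed.

End Quot.
Section Span.
Variables (K : comNzRingType) (R : algType K) (L : lmodType K) (br : L -> L -> L)
  (X : 'I_4 -> 'I_4 -> R -> L).
Hypothesis hL : is_stl4 br X.

Lemma br_linl k x y z : br (k *: x + y) z = k *: br x z + br y z.
Proof. by case: hL => [[h _] _]. Qed.
Lemma br_linr k x y z : br x (k *: y + z) = k *: br x y + br x z.
Proof. by case: hL => [[_ [h _]] _]. Qed.
Lemma br_leib x y z : br x (br y z) = br (br x y) z - br (br x z) y.
Proof. by case: hL => [[_ [_ h]] _]. Qed.

Lemma br0l z : br 0 z = 0.
Proof. have := br_linl 1 0 0 z; rewrite !scale1r addr0 => h.
by apply: (@addrI _ (br 0 z)); rewrite addr0 -h. Qed.
Lemma br0r z : br z 0 = 0.
Proof. have := br_linr 1 z 0 0; rewrite !scale1r addr0 => h.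
by apply: (@addrI _ (br z 0)); rewrite addr0 -h. Qed.
Lemma brDl x y z : br (x + y) z = br x z + br y z.
Proof. by have := br_linl 1 x y z; rewrite !scale1r. Qed.
Lemma brDr x y z : br z (x + y) = br z x + br z y.
Proof. by have := br_linr 1 z x y; rewrite !scale1r. Qed.
Lemma brZl k x z : br (k *: x) z = k *: br x z.
Proof. by have := br_linl k x 0 z; rewrite !addr0 br0l addr0. Qed.
Lemma brZr k x z : br z (k *: x) = k *: br z x.
Proof. by have := br_linr k z x 0; rewrite !addr0 br0r addr0. Qed.
Lemma brNl x z : br (- x) z = - br x z.
Proof. by rewrite -scaleN1r brZl scaleN1r. Qed.
Lemma brNr x z : br z (- x) = - br z x.
Proof. by rewrite -scaleN1r brZr scaleN1r. Qed.
Lemma brBl x y z : br (x - y) z = br x z - br y z.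
Proof. by rewrite brDl brNl. Qed.
Lemma brBr x y z : br z (x - y) = br z x - br z y.
Proof. by rewrite brDr brNr. Qed.
Lemma br_leib' x y z : br (br x y) z = br x (br y z) + br (br x z) y.
Proof. by rewrite br_leib subrK. Qed.

Lemma rel1 i j k a b : i != j -> X i j (k *: a + b) = k *: X i j a + X i j b.
Proof. by case: hL => [_ [[h _] _]] hij; apply: h hij k a b. Qed.
Lemma rel2 i j k a b : i != j -> j != k -> i != k -> br (X i j a) (X j k b) = X i k (a * b).
Proof. move=> h1 h2 h3; case: hL => [_ [[_ [h _]] _]]. exact: h h1 h2 h3 a b. Qed.
Lemma rel3 i j k a b : i != j -> j != k -> i != k -> br (X i j a) (X k i b) = - X k j (b * a).
Proof. move=> h1 h2 h3; case: hL => [_ [[_ [_ [h _]]] _]]. exact: h h1 h2 h3 a b. Qed.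
Lemma rel4 i j k l a b : i != j -> k != l -> j != k -> i != l -> br (X i j a) (X k l b) = 0.
Proof. move=> h1 h2 h3 h4; case: hL => [_ [[_ [_ [_ h]]] _]]. exact: h h1 h2 h3 h4 a b. Qed.

Lemma X0 i j : i != j -> X i j 0 = 0.
Proof. move=> hij; have := rel1 1 0 0 hij; rewrite !scale1r addr0 => h.
by apply: (@addrI _ (X i j 0)); rewrite addr0 -h. Qed.
Lemma XD i j a b : i != j -> X i j (a + b) = X i j a + X i j b.
Proof. by move=> hij; have := rel1 1 a b hij; rewrite !scale1r. Qed.
Lemma XZ i j k a : i != j -> X i j (k *: a) = k *: X i j a.
Proof. by move=> hij; have := rel1 k a 0 hij; rewrite !addr0 X0 // addr0. Qed.
Lemma XN i j a : i != j -> X i j (- a) = - X i j a.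
Proof. by move=> hij; apply/eqP; rewrite -addr_eq0 -XD // addNr X0. Qed.

Definition gen := (('I_4 * 'I_4 * R) + ('I_4 * 'I_4 * R * R))%type.
Definition valg (g : gen) : L :=
  match g with
  | inl (i, j, a) => if i != j then X i j a else 0
  | inr (i, j, a, b) => if i != j then br (X i j a) (X j i b) else 0
  end.
Definition S (x : L) : Prop := exists s : seq gen, x = \sum_(g <- s) valg g.

Lemma S0 : S 0.
Proof. by exists [::]; rewrite big_nil. Qed.
Lemma SD x y : S x -> S y -> S (x + y).
Proof. by move=> [s ->] [s' ->]; exists (s ++ s'); rewrite big_cat. Qed.
Definition scg (k : K) (g : gen) : gen :=
  match g with
  | inl (i, j, a) => inl (i, j, k *: a)
  | inr (i, j, a, b) => inr (i, j, k *: a, b)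
  end.
Lemma valg_scale k g : valg (scg k g) = k *: valg g.
Proof.
case: g => [[[i j] a]|[[[i j] a] b]] /=; case: ifP => hij; rewrite ?scaler0 //.
- by rewrite XZ.
- by rewrite XZ // brZl.
Qed.
Lemma SZ k x : S x -> S (k *: x).
Proof.
move=> [s ->]; exists (map (scg k) s); rewrite big_map scaler_sumr.
by apply: eq_bigr => g _; rewrite valg_scale.
Qed.
Lemma SN x : S x -> S (- x).
Proof. by move=> h; rewrite -scaleN1r; apply: SZ. Qed.
Lemma SB x y : S x -> S y -> S (x - y).
Proof. by move=> hx hy; apply: SD => //; apply: SN. Qed.
Lemma Sg g : S (valg g).
Proof. by exists [:: g]; rewrite big_seq1. Qed.
Lemma SX i j a : i != j -> S (X i j a).
Proof. by move=> hij; have := Sg (inl (i, j, a)); rewrite /= hij. Qed.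

Lemma S_sum I (s : seq I) (F : I -> L) : (forall g, S (F g)) -> S (\sum_(g <- s) F g).
Proof. move=> h; elim: s => [|g s IH]; first by rewrite big_nil; exact: S0. by rewrite big_cons; apply: SD. Qed.
Lemma br_suml I (s : seq I) (F : I -> L) z : br (\sum_(g <- s) F g) z = \sum_(g <- s) br (F g) z.
Proof. elim: s => [|g s IH]; first by rewrite !big_nil br0l. by rewrite !big_cons brDl IH. Qed.
Lemma br_sumr I (s : seq I) (F : I -> L) z : br z (\sum_(g <- s) F g) = \sum_(g <- s) br z (F g).
Proof. elim: s => [|g s IH]; first by rewrite !big_nil br0r. by rewrite !big_cons brDr IH. Qed.

Arguments rel2 : clear implicits.
Arguments rel3 : clear implicits.
Arguments rel4 : clear implicits.
Ltac ne := solve [done | rewrite eq_sym; done].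

Lemma XX_S p q i j a c : p != q -> i != j -> S (br (X p q a) (X i j c)).
Proof.
move=> hpq hij.
case: (eqVneq (i, j) (q, p)) => [[-> ->]|hne].
  by have := Sg (inr (p, q, a, c)); rewrite /= hpq.
case: (eqVneq q i) => [eqi|hqi].
  subst i; have hpj : p != j by apply: contraNneq hne => ->.
  rewrite (rel2 p q j a c); try ne; by apply: SX.
case: (eqVneq j p) => [ejp|hjp].
  subst j; rewrite (rel3 p q i a c); try ne; by apply: SN; apply: SX; rewrite eq_sym.
rewrite (rel4 p q i j a c); try ne; exact: S0.
Qed.

Lemma HX' p q i j a b c : p != q -> i != j -> (i, j) != (p, q) -> (i, j) != (q, p) ->
  exists r, br (br (X p q a) (X q p b)) (X i j c) = X i j r.
Proof.
move=> hpq hij h1 h2.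
have T1 : exists r1, br (X p q a) (br (X q p b) (X i j c)) = X i j r1.
  case: (eqVneq p i) => [epi|hpi].
    subst i; have hqj : q != j by apply: contraNneq h1 => ->.
    rewrite (rel2 q p j b c) ?(rel2 p q j a (b * c)); try ne; by eexists.
  case: (eqVneq j q) => [ejq|hjq].
    subst j; rewrite (rel3 q p i b c) ?brNr ?(rel3 p q i a (c * b)) ?opprK; try ne; by eexists.
  rewrite (rel4 q p i j b c) ?br0r; try ne; by exists 0; rewrite X0.
have T2 : exists r2, br (br (X p q a) (X i j c)) (X q p b) = X i j r2.
  case: (eqVneq q i) => [eqi|hqi].
    subst i; have hpj : p != j by apply: contraNneq h2 => ->.
    rewrite (rel2 p q j a c) ?(rel3 p j q (a * c) b) -?XN; try ne; by eexists.
  case: (eqVneq j p) => [ejp|hjp].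
    subst j; rewrite (rel3 p q i a c) ?brNl ?(rel2 i q p (c * a) b) -?XN; try ne; by eexists.
  rewrite (rel4 p q i j a c) ?br0l; try ne; by exists 0; rewrite X0.
case: T1 => r1 e1; case: T2 => r2 e2.
by exists (r1 + r2); rewrite br_leib' e1 e2 XD.
Qed.

Lemma third (i j : 'I_4) : exists m : 'I_4, (m != i) && (m != j).
Proof.
case: i => [[|[|[|[|?]]]] hi] //; case: j => [[|[|[|[|?]]]] hj] //;
  first [ by exists (@Ordinal 4 0 isT) | by exists (@Ordinal 4 1 isT) | by exists (@Ordinal 4 2 isT) ].
Qed.

Lemma HX p q i j a b c : p != q -> i != j ->
  exists r, br (br (X p q a) (X q p b)) (X i j c) = X i j r.
Proof.
move=> hpq hij.
have [hnp|hp] := boolP (((i, j) != (p, q)) && ((i, j) != (q, p))).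
  by case/andP: hnp => h1 h2; apply: HX'.
have [m /andP [hmi hmj]] := third i j.
have hmp : m != p /\ m != q.
  move: hp; rewrite negb_and !negbK => /orP [] /eqP [<- <-]; split => //.
have [hmp' hmq'] := hmp.
have nprob : forall u v : 'I_4, (u == m) || (v == m) -> (u, v) != (p, q) /\ (u, v) != (q, p).
  move=> u v huv; split; apply/negP => /eqP [eu ev]; subst u v;
  move: huv => /orP [] /eqP e; subst m;
  first [by rewrite eqxx in hmp' | by rewrite eqxx in hmq'].
have [r1 e1] : exists r1, br (br (X p q a) (X q p b)) (X i m c) = X i m r1.
  have [n1 n2] := nprob i m ltac:(by rewrite eqxx orbT); apply: HX' => //; by rewrite eq_sym.
have [r2 e2] : exists r2, br (br (X p q a) (X q p b)) (X m j 1) = X m j r2.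
  have [n1 n2] := nprob m j ltac:(by rewrite eqxx); by apply: HX'.
have ex : X i j c = br (X i m c) (X m j 1) by rewrite (rel2 i m j c 1) ?mulr1; try ne.
exists (r1 * 1 + c * r2).
rewrite ex br_leib e1 e2 (rel2 i m j r1 1) ?(rel3 m j i r2 c) ?opprK ?XD; try ne.
Qed.

Lemma RX g i j c : i != j -> S (br (valg g) (X i j c)).
Proof.
move=> hij; case: g => [[[p q] a]|[[[p q] a] b]] /=; case: ifP => hpq; rewrite ?br0l; try exact: S0.
  exact: XX_S.
by have [r ->] := HX a b c hpq hij; apply: SX.
Qed.

Lemma SX_r x i j c : i != j -> S x -> S (br x (X i j c)).
Proof. by move=> hij [s ->]; rewrite br_suml; apply: S_sum => g; apply: RX. Qed.

Lemma Sbr_g x g : S x -> S (br x (valg g)).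
Proof.
move=> hx; case: g => [[[p q] a]|[[[p q] a] b]] /=; case: ifP => hpq; rewrite ?br0r; try exact: S0.
  exact: SX_r.
rewrite br_leib; apply: SB; apply: SX_r => //; try apply: SX_r => //; by rewrite eq_sym.
Qed.

Lemma Sbr x y : S x -> S y -> S (br x y).
Proof. by move=> hx [s ->]; rewrite br_sumr; apply: S_sum => g; apply: Sbr_g. Qed.


Definition Sb : {pred L} := fun x => if ClassicalEpsilon.excluded_middle_informative (S x) then true else false.
Lemma SbP x : reflect (S x) (x \in Sb).
Proof. rewrite /in_mem /= /Sb; case: ClassicalEpsilon.excluded_middle_informative => h; by constructor. Qed.

Lemma Sb_closed : GRing.submod_closed Sb.
Proof.
split; first by apply/SbP; exact: S0.
move=> k u v /SbP hu /SbP hv; apply/SbP; apply: SD => //; exact: SZ.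
Qed.
HB.instance Definition _ := GRing.isSubmodClosed.Build K L Sb Sb_closed.

Inductive ST : predArgType := STmk (u : L) of u \in Sb.
Definition STval (w : ST) : L := let: STmk u _ := w in u.
HB.instance Definition _ := [isSub of ST for STval].
HB.instance Definition _ := [Choice of ST by <:].
HB.instance Definition _ := [SubChoice_isSubZmodule of ST by <:].
HB.instance Definition _ := [SubZmodule_isSubLmodule of ST by <:].

Lemma val_lin k (x y : ST) : val (k *: x + y) = k *: val x + val y.
Proof. by []. Qed.


Definition brST (a b : ST) : ST := insubd (0 : ST) (br (val a) (val b)).
Lemma val_brST a b : val (brST a b) = br (val a) (val b).
Proof.
rewrite /brST insubdK //; apply/SbP; apply: Sbr; apply/SbP; exact: (valP _).
Qed.
Definition YST i j (a : R) : ST := insubd (0 : ST) (X i j a).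
Lemma val_YST i j a : i != j -> val (YST i j a) = X i j a.
Proof. by move=> hij; rewrite /YST insubdK //; apply/SbP; apply: SX. Qed.

Lemma ST_leib : is_leibniz brST.
Proof.
split; [|split].
- move=> k x y z; apply: val_inj; rewrite !val_lin !val_brST val_lin; exact: br_linl.
- move=> k x y z; apply: val_inj; rewrite !val_lin !val_brST val_lin; exact: br_linr.
- move=> x y z; apply: val_inj.
  have -> : forall u v : ST, val (u - v) = val u - val v by [].
  rewrite !val_brST; exact: br_leib.
Qed.

Lemma ST_rel : stl4_relations brST YST.
Proof.
split.
  move=> i j hij k a b; apply: val_inj; rewrite val_lin !val_YST //; exact: rel1.
split.
  move=> i j k h1 h2 h3 a b; apply: val_inj; rewrite val_brST !val_YST //; exact: (rel2 i j k a b h1 h2 h3).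
split.
  move=> i j k h1 h2 h3 a b; apply: val_inj.
  have -> : forall u : ST, val (- u) = - val u by [].
  rewrite val_brST !val_YST; try ne. by rewrite (rel3 i j k a b h1 h2 h3).
move=> i j k l h1 h2 h3 h4 a b; apply: val_inj; rewrite val_brST !val_YST //; exact: (rel4 i j k l a b h1 h2 h3 h4).
Qed.

Lemma S_all x : S x.
Proof.
have [hleib [hrel huniv]] := hL.
have [[f [flin [fbr fX]]] _] := huniv ST brST YST ST_leib ST_rel.
have [_ uniq] := huniv L br X hleib hrel.
have e : val (f x) = x.
  apply: (uniq (fun y => val (f y)) id) => //.
  - by move=> k u v; rewrite flin.
  - by move=> u v; rewrite fbr val_brST.
  - by move=> i j a hij; rewrite fX // val_YST.
rewrite -e; apply/SbP; exact: (valP (f x)).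
Qed.

End Span.

Section Main.
Variables (K : comNzRingType) (R : algType K) (L : lmodType K) (br : L -> L -> L)
  (X : 'I_4 -> 'I_4 -> R -> L).
Hypothesis hL : is_stl4 br X.
Variables (R2 : lmodType K) (pr : R -> R2).
Hypothesis hR2 : is_quotient_R2 pr.
Variable theta : 'I_4 -> 'I_4 -> 'I_4 -> 'I_4 -> 'I_6.
Hypothesis htheta : is_class_labelling theta.
Variable psi : L -> L -> 'I_6 -> R2.
Hypothesis psi_linl : forall (k : K) (x y z : L) (t : 'I_6),
      psi (k *: x + y) z t = k *: psi x z t + psi y z t.
Hypothesis psi_linr : forall (k : K) (x y z : L) (t : 'I_6),
      psi x (k *: y + z) t = k *: psi x y t + psi x z t.
Hypothesis psi_XX : forall (i j k l : 'I_4) (a b : R) (t : 'I_6), i != j -> k != l ->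
      psi (X i j a) (X k l b) t =
        if pairwise_distinct4 i j k l then eps (theta i j k l) (pr (a * b)) t
        else 0.
Hypothesis psi_Hl : forall (i j : 'I_4) (a b : R) (x : L) (t : 'I_6), i != j ->
      psi (br (X i j a) (X j i b)) x t = 0.
Hypothesis psi_Hr : forall (i j : 'I_4) (a b : R) (x : L) (t : 'I_6), i != j ->
      psi x (br (X i j a) (X j i b)) t = 0.

Lemma psi0l y t : psi 0 y t = 0.
Proof. have := psi_linl 1 0 0 y t; rewrite !scale1r addr0 => h.
by apply: (@addrI _ (psi 0 y t)); rewrite addr0 -h. Qed.
Lemma psi0r y t : psi y 0 t = 0.
Proof. have := psi_linr 1 y 0 0 t; rewrite !scale1r addr0 => h.
by apply: (@addrI _ (psi y 0 t)); rewrite addr0 -h. Qed.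
Lemma psiDl x x' y t : psi (x + x') y t = psi x y t + psi x' y t.
Proof. by have := psi_linl 1 x x' y t; rewrite !scale1r. Qed.
Lemma psiDr x x' y t : psi y (x + x') t = psi y x t + psi y x' t.
Proof. by have := psi_linr 1 y x x' t; rewrite !scale1r. Qed.

Lemma main_cocycle (x y z : L) (t : 'I_6) :
    psi x (br y z) t + psi (br x z) y t - psi (br x y) z t = 0.
Proof.
have [hleib [hrel huniv]] := hL.
have [[F [Flin [Fbr FX]]] _] := huniv _ _ _ (M_leibniz hR2) (M_rel hR2).
have F0 : F 0 = 0.
  have := Flin 1 0 0; rewrite !scale1r addr0 => h.
  by apply: (@addrI _ (F 0)); rewrite addr0 -h.
have FD : forall u v, F (u + v) = F u + F v by move=> u v; have := Flin 1 u v; rewrite !scale1r.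
have Fsum : forall (s : seq (gen R)), F (\sum_(g <- s) valg br X g) = \sum_(g <- s) F (valg br X g).
  elim=> [|g s IH]; first by rewrite !big_nil F0.
  by rewrite !big_cons FD IH.
have Fg : forall g : gen R, (exists i j a, i != j /\ valg br X g = X i j a /\ F (valg br X g) = Ym pr i j a)
   \/ (exists i j a b, i != j /\ valg br X g = br (X i j a) (X j i b) /\
        F (valg br X g) = brM hR2 (Ym pr i j a) (Ym pr j i b))
   \/ valg br X g = 0.
  case=> [[[i j] a]|[[[i j] a] b]] /=; case: ifP => hij; try by right; right.
    by left; exists i, j, a; rewrite FX.
  right; left; exists i, j, a, b; split => //; split => //.
  by rewrite Fbr !FX // eq_sym.
have trF : forall u, trM (F u) = 0.
  move=> u; have [s ->] := S_all hL u; rewrite Fsum.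
  elim: s => [|g s IH]; first by rewrite big_nil (trM0 hR2).
  rewrite big_cons (trMD hR2) IH addr0.
  case: (Fg g) => [[i [j [a [hij [_ ->]]]]]|[[i [j [a [b [hij [_ ->]]]]]]| ->]].
  - exact: (trMY hR2).
  - exact: (trM_brM hR2).
  - by rewrite F0 (trM0 hR2).
have psi_gen : forall g g' : gen R,
    psi (valg br X g) (valg br X g') t = Bf hR2 theta t (F (valg br X g)) (F (valg br X g')).
  move=> g g'.
  case: (Fg g) => [[i [j [a [hij [e1 e2]]]]]|[[i [j [a [b [hij [e1 e2]]]]]]| e]].
  - case: (Fg g') => [[k [l [c [hkl [e3 e4]]]]]|[[k [l [c [d [hkl [e3 e4]]]]]]| e]].
    + by rewrite e2 e4 e1 e3 psi_XX // Bf_YY.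
    + rewrite e4 e3 psi_Hr // Bf_diagr // => p q hpq; exact: Ym_off.
    + by rewrite e psi0r F0 Bf0r.
  - rewrite e2 e1 psi_Hl // Bf_diagl // => p q hpq; exact: Ym_off.
  - by rewrite e psi0l F0 Bf0l.
have Hv : forall (g : gen R) v, psi (valg br X g) v t = Bf hR2 theta t (F (valg br X g)) (F v).
  move=> g v; have [s' ->] := S_all hL v.
  apply: (big_ind (fun w => psi (valg br X g) w t = Bf hR2 theta t (F (valg br X g)) (F w))).
  - by rewrite psi0r F0 Bf0r.
  - by move=> w1 w2 e1 e2; rewrite psiDr FD BfDr // e1 e2.
  - move=> g' _; exact: psi_gen.
have psiE : forall u v, psi u v t = Bf hR2 theta t (F u) (F v).
  move=> u v; have [s ->] := S_all hL u.
  apply: (big_ind (fun w => psi w v t = Bf hR2 theta t (F w) (F v))).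
  - by rewrite psi0l F0 Bf0l.
  - by move=> w1 w2 e1 e2; rewrite psiDl FD BfDl // e1 e2.
  - move=> g _; exact: Hv.
rewrite !psiE !Fbr.
exact: (Bf_cocycle hR2 htheta t (trF x) (trF y) (trF z)).
Qed.

End Main.

Theorem lemma3p3
  (K : comNzRingType) (R : algType K)
  (hfree : free_with_basis_containing_1 R)
  (L : lmodType K) (br : L -> L -> L) (X : 'I_4 -> 'I_4 -> R -> L)
  (hL : is_stl4 br X)
  (R2 : lmodType K) (pr : R -> R2) (hR2 : is_quotient_R2 pr)
  (theta : 'I_4 -> 'I_4 -> 'I_4 -> 'I_4 -> 'I_6) (htheta : is_class_labelling theta)
  (psi : L -> L -> 'I_6 -> R2)
  (psi_linl : forall (k : K) (x y z : L) (t : 'I_6),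
      psi (k *: x + y) z t = k *: psi x z t + psi y z t)
  (psi_linr : forall (k : K) (x y z : L) (t : 'I_6),
      psi x (k *: y + z) t = k *: psi x y t + psi x z t)
  (psi_XX : forall (i j k l : 'I_4) (a b : R) (t : 'I_6), i != j -> k != l ->
      psi (X i j a) (X k l b) t =
        if pairwise_distinct4 i j k l then eps (theta i j k l) (pr (a * b)) t
        else 0)
  (psi_Hl : forall (i j : 'I_4) (a b : R) (x : L) (t : 'I_6), i != j ->
      psi (br (X i j a) (X j i b)) x t = 0)
  (psi_Hr : forall (i j : 'I_4) (a b : R) (x : L) (t : 'I_6), i != j ->
      psi x (br (X i j a) (X j i b)) t = 0) :
  forall (x y z : L) (t : 'I_6),
    psi x (br y z) t + psi (br x z) y t - psi (br x y) z t = 0.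
Proof.
move=> x y z t.
exact: (main_cocycle hL hR2 htheta psi_linl psi_linr psi_XX psi_Hl psi_Hr).
Qed.
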